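(* Let $L$ be an $\omega$-regular language over $\Sigma$, let $\mathcal{F}=(M,\{A^u\})$ be the periodic (respectively syntactic, recurrent) FDFA of $L$, and let $u,v\in\Sigma^*$. If $(u,v)$ is accepted by $\mathcal{F}$, then $(u,v^k)$ is accepted by $\mathcal{F}$ for every $k\geq1$.
   Context: For a complete DFA $A$ and finite word $w$, $A(w)$ is the state reached from the initial state on $w$. An FDFA is $\mathcal{F}=(M,\{A^q\}_{q\in Q})$ with $M$ a complete DFA without accepting states and each $A^q$ a complete DFA; $(u,v)$ is accepted by $\mathcal{F}$ iff $M(uv)=M(u)$ and $v\in L(A^{M(u)})$. Canonical FDFAs of an $\omega$-regular $L$: $x\sim_L y$ iff $\forall w\in\Sigma^\omega$, $xw\in L\Leftrightarrow yw\in L$. The leading automaton has states the classes of $\sim_L$, initial state $[\epsilon]$, transitions $[x]\xrightarrow{a}[xa]$. For each state with representative $u$: $x\approx^u_P y$ iff $\forall v\in\Sigma^*$: $u(xv)^\omega\in L\Leftrightarrow u(yv)^\omega\in L$; $x\approx^u_S y$ iff $ux\sim_L uy$ and $\forall v$: $uxv\sim_L u\Rightarrow(u(xv)^\omega\in L\Leftrightarrow u(yv)^\omega\in L)$; $x\approx^u_R y$ iff $\forall v$: $(uxv\sim_L u\wedge u(xv)^\omega\in L)\Leftrightarrow(uyv\sim_L u\wedge u(yv)^\omega\in L)$. For $K\in\{P,S,R\}$ the progress automaton $A^u$ has states the classes of $\approx^u_K$, initial state $[\epsilon]$, transitions $[x]\xrightarrow{a}[xa]$, and accepting states the classes $[v]$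 with $uv^\omega\in L$ ($K=P$), resp. with $uv\sim_L u$ and $uv^\omega\in L$ ($K\in\{S,R\}$). These are the periodic ($P$), syntactic ($S$) and recurrent ($R$) FDFAs of $L$. *)

(* Defs.v *)
From mathcomp Require Import all_boot boolp.
Set Implicit Arguments. Unset Strict Implicit. Unset Printing Implicit Defensive.

Section Defs.
Variable S : finType.

Definition oword := nat -> S.

Definition prepend (x : seq S) (w : oword) : oword :=
  fun n => if n < size x then nth (w 0) x n else w (n - size x).

(* u x^omega is in L ; x^omega is only an omega-word for nonempty x,
   so the predicate is false when x is empty *)
Definition inL (L : oword -> Prop) (u x : seq S) : Prop :=
  match x with
  | [::] => False
  | a :: _ => L (prepend u (fun n => nth a x (n %% size x)))
  end.

Definition omega_regular (L : oword -> Prop) : Prop :=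
  exists (Q : finType) (I : pred Q) (T : Q -> S -> Q -> bool) (F : pred Q),
    forall w, L w <->
      exists r : nat -> Q, I (r 0) /\ (forall n, T (r n) (w n) (r n.+1))
                           /\ (forall m, exists n, m <= n /\ F (r n)).

Record dfa := Dfa {
  dfa_st : Type;
  dfa_init : dfa_st;
  dfa_step : dfa_st -> S -> dfa_st;
  dfa_acc : dfa_st -> Prop }.

Definition dfa_run (A : dfa) (w : seq S) : dfa_st A :=
  foldl (@dfa_step A) (@dfa_init A) w.

Record fdfa := Fdfa {
  lead : dfa;                     (* leading automaton M (acceptance unused) *)
  prog : dfa_st lead -> dfa }.

Definition fdfa_accepts (F : fdfa) (u v : seq S) : Prop :=
  dfa_run (lead F) (u ++ v) = dfa_run (lead F) u /\
  dfa_acc (dfa_run (prog (dfa_run (lead F) u)) v).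

Definition simL (L : oword -> Prop) (x y : seq S) : Prop :=
  forall w, L (prepend x w) <-> L (prepend y w).

Inductive fdfa_kind := Periodic | Syntactic | Recurrent.

Definition progeq (K : fdfa_kind) (L : oword -> Prop) (u x y : seq S) : Prop :=
  match K with
  | Periodic => forall v, inL L u (x ++ v) <-> inL L u (y ++ v)
  | Syntactic => simL L (u ++ x) (u ++ y) /\
      forall v, simL L (u ++ x ++ v) u -> (inL L u (x ++ v) <-> inL L u (y ++ v))
  | Recurrent => forall v,
      (simL L (u ++ x ++ v) u /\ inL L u (x ++ v)) <->
      (simL L (u ++ y ++ v) u /\ inL L u (y ++ v))
  end.

Definition progacc (K : fdfa_kind) (L : oword -> Prop) (u v : seq S) : Prop :=
  match K with
  | Periodic => inL L u v
  | _ => simL L (u ++ v) u /\ inL L u v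
  end.

Definition cls (E : seq S -> seq S -> Prop) (x : seq S) : seq S -> Prop :=
  fun y => E x y.

Definition class_of (E : seq S -> seq S -> Prop) :=
  {C : seq S -> Prop | exists x, C = cls E x}.

Definition repr (E : seq S -> seq S -> Prop) (C : class_of E) : seq S :=
  proj1_sig (cid (proj2_sig C)).

Definition class_dfa (E : seq S -> seq S -> Prop) (acc : seq S -> Prop) : dfa :=
  {| dfa_st := class_of E;
     dfa_init := exist _ (cls E [::]) (ex_intro _ [::] erefl);
     dfa_step := fun C a =>
       exist _ (cls E (repr C ++ [:: a])) (ex_intro _ (repr C ++ [:: a]) erefl);
     dfa_acc := fun C => exists v, proj1_sig C = cls E v /\ acc v |}.

Definition leading_dfa (L : oword -> Prop) : dfa :=
  class_dfa (simL L) (fun _ => False).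

Definition progress_dfa (K : fdfa_kind) (L : oword -> Prop) (u : seq S) : dfa :=
  class_dfa (progeq K L u) (progacc K L u).

Definition canonical_fdfa (K : fdfa_kind) (L : oword -> Prop) : fdfa :=
  {| lead := leading_dfa L;
     prog := fun C : class_of (simL L) => progress_dfa K L (repr C) |}.

End Defs.

(* Main.v *)
Require Import Defs.
From mathcomp Require Import all_boot boolp.
From mathcomp Require Import zify.

Section Aux.
Variable S : finType.
Implicit Types (x y z w : seq S) (L : oword S -> Prop) (E : seq S -> seq S -> Prop) (acc : seq S -> Prop).

Definition equivR (E : seq S -> seq S -> Prop) :=
  [/\ (forall x, E x x), (forall x y, E x y -> E y x) &
      (forall x y z, E x y -> E y z -> E x z)].
Definition rcong (E : seq S -> seq S -> Prop) :=
  forall x y z, E x y -> E (x ++ z) (y ++ z).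

Lemma cls_eq E x y : equivR E -> E x y -> cls E x = cls E y.
Proof.
case=> r s t h; apply: funext => z; apply: propext; rewrite /cls; split => h'.
  exact: t (s _ _ h) h'.
exact: t h h'.
Qed.

Lemma cls_eqE E x y : equivR E -> cls E x = cls E y -> E x y.
Proof. case=> r s t h; have : cls E y y by exact: r. by rewrite -h. Qed.

Lemma repr_spec (E : seq S -> seq S -> Prop) (C : class_of E) : proj1_sig C = cls E (Defs.repr C).
Proof. rewrite /Defs.repr; exact: (proj2_sig (cid (proj2_sig C))). Qed.

Lemma run_cls E acc w : equivR E -> rcong E ->
  proj1_sig (dfa_run (class_dfa E acc) w) = cls E w.
Proof.
move=> eE rE; rewrite /dfa_run.
suff H : forall (C : class_of E) x, proj1_sig C = cls E x ->
   proj1_sig (foldl (@dfa_step _ (class_dfa E acc)) C w) = cls E (x ++ w).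
  by apply: (H _ [::]).
elim: w => [|a w IH] C x hC; first by rewrite cats0.
rewrite (_ : x ++ a :: w = (x ++ [:: a]) ++ w); last by rewrite -catA.
apply: IH => /=.
apply: cls_eq => //; apply: rE.
case: (eE) => r s t; apply: s; apply: cls_eqE => //.
by rewrite -hC; exact: repr_spec.
Qed.

Lemma state_eq E acc (C D : dfa_st (class_dfa E acc)) :
  proj1_sig C = proj1_sig D -> C = D.
Proof.
case: C D => [c pc] [d pd] /= e; subst; congr exist; exact: Prop_irrelevance.
Qed.

Lemma acc_iff E acc w : equivR E -> rcong E ->
  (forall x y, E x y -> acc x -> acc y) ->
  dfa_acc (dfa_run (class_dfa E acc) w) <-> acc w.
Proof.
move=> eE rE cE /=; rewrite run_cls //; split.
  case=> v [h a]; apply: cE a; apply: cls_eqE => //; by rewrite h.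
by move=> a; exists w.
Qed.

Lemma prepend_cat x y (w : oword S) : prepend (x ++ y) w = prepend x (prepend y w).
Proof.
apply: funext => n; rewrite /prepend size_cat nth_cat.
case: (ltnP n (size x)) => h1.
  have -> : n < size x + size y = true by lia.
  exact: set_nth_default.
case: (ltnP n (size x + size y)) => h2.
  by have -> : n - size x < size y = true by lia.
have -> : n - size x < size y = false by lia.
by rewrite subnDA.
Qed.

Lemma simL_equiv L : equivR (simL L).
Proof.
split; rewrite /simL.
- by move=> x w.
- by move=> x y h w; rewrite h.
- by move=> x y z h1 h2 w; rewrite h1 h2.
Qed.

Lemma simL_refl L x : simL L x x. Proof. by case: (simL_equiv L). Qed.
Lemma simL_sym L x y : simL L x y -> simL L y x. Proof. by case: (simL_equiv L) => _ h _; apply: h. Qed.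
Lemma simL_trans L x y z : simL L x y -> simL L y z -> simL L x z.
Proof. by case: (simL_equiv L) => _ _ h; apply: h. Qed.

Lemma simL_rcong L : rcong (simL L).
Proof. by move=> x y z h w; rewrite !prepend_cat h. Qed.

Lemma progeq_equiv K L u : equivR (progeq K L u).
Proof.
case: K; split => /=.
- by [].
- by move=> x y h v; rewrite h.
- by move=> x y z h1 h2 v; rewrite h1 h2.
- move=> x; split => //; exact: (simL_refl L).
- move=> x y [h1 h2]; split; first exact: (@simL_sym L) h1.
  move=> v hv; symmetry; apply: h2.
  rewrite !catA in hv *.
  apply: (@simL_trans L) hv; exact: simL_rcong.
- move=> x y z [h1 h2] [h3 h4]; split; first exact: (@simL_trans L) h1 h3.
  move=> v hv; rewrite h2 //; apply: h4.
  rewrite !catA in hv *.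
  apply: (@simL_trans L) hv; apply: simL_rcong; exact: (@simL_sym L) h1.
- by [].
- by move=> x y h v; rewrite h.
- by move=> x y z h1 h2 v; rewrite h1 h2.
Qed.

Lemma progeq_rcong K L u : rcong (progeq K L u).
Proof.
case: K => x y z /=.
- by move=> h v; rewrite -!catA h.
- move=> [h1 h2]; split; first by rewrite !catA; apply: simL_rcong.
  by move=> v; rewrite -!catA; apply: h2.
- by move=> h v; rewrite -!catA h.
Qed.

Lemma progacc_compat K L u x y :
  progeq K L u x y -> progacc K L u x -> progacc K L u y.
Proof.
case: K => /=.
- by move=> h; have := h [::]; rewrite !cats0 => ->.
- move=> [h1 h2] [h3 h4].
  have h5 : simL L (u ++ y) u.
    apply: (@simL_trans L) h3; exact: (@simL_sym L) h1.
  split => //; have := h2 [::]; rewrite !cats0 => h6; rewrite -h6 //.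
- by move=> h; have := h [::]; rewrite !cats0 => -> .
Qed.

Lemma simL_rep L r v k : simL L (r ++ v) r -> simL L (r ++ flatten (nseq k v)) r.
Proof.
move=> h; elim: k => [|k IH] /=; first by rewrite cats0; exact: (simL_refl L).
rewrite catA; apply: (@simL_trans L) IH.
exact: simL_rcong.
Qed.

Lemma size_rep (v : seq S) k : size (flatten (nseq k v)) = k * size v.
Proof. elim: k => [|k IH] //=; by rewrite size_cat IH mulSn. Qed.

Lemma nth_rep (a : S) v k i : i < k * size v ->
  nth a (flatten (nseq k v)) i = nth a v (i %% size v).
Proof.
elim: k i => [|k IH] i //=; rewrite mulSn => hi.
rewrite nth_cat; case: ifP => h; first by rewrite modn_small.
rewrite IH; last by lia.
have {2}-> : i = (i - size v) + size v by lia.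
by rewrite modnDr.
Qed.

Lemma inL_rep L r v k : inL L r v -> inL L r (flatten (nseq k.+1 v)).
Proof.
case: v => [|a v'] //.
set w := flatten _.
have hw : w = a :: (v' ++ flatten (nseq k (a :: v'))) by [].
change (L (prepend r (fun n => nth a (a :: v') (n %% size (a :: v')))) -> L (prepend r (fun n => nth a w (n %% size w)))) => h.
have sz : size w = k.+1 * size (a :: v') by rewrite size_rep.
have -> : (fun n => nth a w (n %% size w)) = (fun n => nth a (a :: v') (n %% size (a :: v'))) => //.
apply: funext => n; rewrite nth_rep; last by rewrite -sz ltn_pmod // sz.
rewrite sz modn_dvdm //; exact: dvdn_mull.
Qed.

End Aux.

Theorem proposition1 (S : finType) (L : oword S -> Prop) (K : fdfa_kind)
    (u v : seq S) :
  omega_regular L ->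
  fdfa_accepts (canonical_fdfa K L) u v ->
  forall k : nat, 0 < k ->
    fdfa_accepts (canonical_fdfa K L) u (flatten (nseq k v)).
Proof.
move=> _ [h1 h2] [|k] // _; rewrite /fdfa_accepts /=.
have e1 : simL L (u ++ v) u.
  apply: cls_eqE; first exact: simL_equiv.
  have := congr1 (@proj1_sig _ _) h1.
  rewrite /= /leading_dfa !run_cls //; try (exact: simL_equiv || exact: simL_rcong).
set C := dfa_run _ u in h2 *.
move: h2; rewrite /progress_dfa !acc_iff;
  try (exact: progeq_equiv || exact: progeq_rcong || exact: progacc_compat).
move=> hacc; split.
  apply: state_eq; rewrite /= /leading_dfa !run_cls;
    try (exact: simL_equiv || exact: simL_rcong).
  apply: cls_eq; first exact: simL_equiv.
  by have := @simL_rep S L u v k.+1 e1.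
apply/acc_iff; try (exact: progeq_equiv || exact: progeq_rcong || exact: progacc_compat).
clear h1 e1; case: K C hacc => C /= => /= => [|[hs hi]|[hs hi]]; try split;
  try (exact: inL_rep); try (exact: simL_rep).
all: by have := @simL_rep S L _ v k.+1 hs.
Qed.
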